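(* Let $\Sigma_A$, $\pi$, $\Pi$ be as in the context and let $\lambda$ be a symmetric Markov measure on $\Sigma_A$. If $B\subset\Sigma_A\times I$ is a bony graph relative to $\lambda$, then $\Pi(B)$ is a bi-bony graph relative to $\pi_*\lambda$. Moreover, if $B$ is continuous, then so is $\Pi(B)$.
   Context: $I=[0,1]$, $R(x)=1-x$. Given $C^1$-diffeomorphisms onto their images $f_1,\ldots,f_N$ of $I$, let $\mathcal I_P$ / $\mathcal I_R$ be the indices of orientation preserving / reversing $f_i$. $A=(a_{ij})_{i,j=1}^{2N}$ with $a_{ij}=1$ if ($i\in\mathcal I_P$, $j\le N$), or ($i\in\mathcal I_R$, $j>N$), or ($i-N\in\mathcal I_P$, $j>N$), or ($i-N\in\mathcal I_R$, $j\le N$), else $0$; $\Sigma_A$ the $A$-admissible sequences in $\{1,\ldots,2N\}^{\mathbb Z}$; $\pi\colon\Sigma_A\to\Sigma_N=\{1,\ldots,N\}^{\mathbb Z}$, $\pi(\omega)_n=\overline{\omega_n}$ ($\overline i=i$ for $i\le N$, $\overline i=i-N$ otherwise). $C=\{\omega\colon\omega_0\le N\}$; $\Pi(\omega,x)=(\pi(\omega),x)$ if $\omega\in C$, $(\pi(\omega),R(x))$ otherwise. A Markov measure on $\Sigma_A$ with probability vector $(p_i)$ and stochastic matrix $(P_{ij})$ is symmetric if $p_i=p_{i+N}$, $P_{ij}=P_{(i+N)(j+N)}$, $P_{i(j+N)}=P_{(i+N)j}$ for $i,j\le N$. For $\Sigma\in\{\Sigma_A,\Sigma_N\}$, $B\subset\Sigma\times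 I$ and $\xi\in\Sigma$, $B_\xi$ is the set of $x$ with $(\xi,x)\in B$. Relative to a Borel probability $\lambda$ on $\Sigma$, $B$ is a bony graph if $B_\xi$ is a single point for $\lambda$-a.e. $\xi$ and an interval at all remaining points; it is continuous if for every $\xi$ in the projection $\Pi_1(B)$ and $\varepsilon>0$ there is $\delta>0$ such that $\eta\in\Pi_1(B)$, $d(\eta,\xi)<\delta$ imply $B_\eta\subset U_\varepsilon(B_\xi)$. A (continuous) bi-bony graph is a union of two (continuous) bony graphs. *)

(* Defs.v *)
From HB Require Import structures.
From mathcomp Require Import all_boot all_order all_algebra.
From mathcomp Require Import all_classical all_reals all_analysis.
Set Implicit Arguments. Unset Strict Implicit. Unset Printing Implicit Defensive.
Import Order.TTheory GRing.Theory Num.Theory.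
Local Open Scope classical_set_scope.
Local Open Scope ring_scope.

(* Alphabet {1,...,2N} is encoded as 'I_(N+N) (0-based):               *)
(*   lshift N i  <-> symbol i+1       (i.e. symbols <= N)              *)
(*   rshift N i  <-> symbol N+i+1     (i.e. symbols >  N)              *)

(* "i <= N" in the paper's 1-based numbering *)
Definition isLo {N : nat} (i : 'I_(N + N)) : bool := (i < N)%N.

Definition bar {N : nat} (i : 'I_(N + N)) : 'I_N :=
  match fintype.split i with inl j => j | inr j => j end.

Definition orient_pres {R : realType} (g : R -> R) : Prop :=
  forall x y : R, 0 <= x -> x < y -> y <= 1 -> g x < g y.
Definition orient_rev {R : realType} (g : R -> R) : Prop :=
  forall x y : R, 0 <= x -> x < y -> y <= 1 -> g y < g x.

Definition adm {R : realType} {N : nat} (f : 'I_N -> R -> R)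
    (i j : 'I_(N + N)) : Prop :=
  [\/ [/\ isLo i, orient_pres (f (bar i)) & isLo j],
      [/\ isLo i, orient_rev (f (bar i)) & ~~ isLo j],
      [/\ ~~ isLo i, orient_pres (f (bar i)) & ~~ isLo j] |
      [/\ ~~ isLo i, orient_rev (f (bar i)) & isLo j]].

Definition SigmaA {R : realType} {N : nat} (f : 'I_N -> R -> R)
    : set (int -> 'I_(N + N)) :=
  [set w | forall k : int, adm f (w k) (w (k + 1))].

(* sequence spaces; the number of maps is n.+1 (i.e. N >= 1) *)
Definition seqA (n : nat) := int -> 'I_(n.+1 + n.+1).
Definition seqN (n : nat) := int -> 'I_n.+1.
HB.instance Definition _ n := Choice.on (seqA n).
HB.instance Definition _ n := isPointed.Build (seqA n) (fun _ => lshift _ ord0).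
HB.instance Definition _ n := Choice.on (seqN n).
HB.instance Definition _ n := isPointed.Build (seqN n) (fun _ => ord0).

Definition cylA (n : nat) : set (set (seqA n)) :=
  [set C | exists (k : int) (i : 'I_(n.+1 + n.+1)), C = [set w | w k = i]].
Definition cylN (n : nat) : set (set (seqN n)) :=
  [set C | exists (k : int) (i : 'I_n.+1), C = [set w | w k = i]].
Arguments cylA : clear implicits.
Arguments cylN : clear implicits.
Definition SA (n : nat) := g_sigma_algebraType (cylA n).
Definition SN (n : nat) := g_sigma_algebraType (cylN n).

Definition cylinder {K : Type} (m : int) (k : nat) (s : 'I_k.+1 -> K)
    : set (int -> K) :=
  [set w | forall j : 'I_k.+1, w (m + (j : nat)%:Z) = s j].

Definition mweight {R : realType} {K : finType} (p : K -> R) (P : K -> K -> R)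
    (k : nat) (s : 'I_k.+1 -> K) : R :=
  p (s ord0) * \prod_(j < k) P (s (widen_ord (leqnSn k) j)) (s (lift ord0 j)).

Definition markov_measure {R : realType} {n : nat} (f : 'I_n.+1 -> R -> R)
    (p : 'I_(n.+1 + n.+1) -> R) (P : 'I_(n.+1 + n.+1) -> 'I_(n.+1 + n.+1) -> R)
    (lam : set (SA n) -> \bar R) : Prop :=
  [/\ (forall i, 0 <= p i) /\ \sum_i p i = 1,
      (forall i j, 0 <= P i j) /\ (forall i, \sum_j P i j = 1),
      (forall i j, ~ adm f i j -> P i j = 0),
      (forall j, \sum_i p i * P i j = p j) &
      (forall (m : int) (k : nat) (s : 'I_k.+1 -> 'I_(n.+1 + n.+1)),
          lam (@cylinder _ m k s) = (mweight p P s)%:E)].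

Definition symmetric_markov {R : realType} {n : nat} (f : 'I_n.+1 -> R -> R)
    (p : 'I_(n.+1 + n.+1) -> R) (P : 'I_(n.+1 + n.+1) -> 'I_(n.+1 + n.+1) -> R)
    (lam : set (SA n) -> \bar R) : Prop :=
  markov_measure f p P lam /\
  forall i j : 'I_n.+1,
    [/\ p (lshift _ i) = p (rshift _ i),
        P (lshift _ i) (lshift _ j) = P (rshift _ i) (rshift _ j) &
        P (lshift _ i) (rshift _ j) = P (rshift _ i) (lshift _ j)].

Definition piA (n : nat) : SA n -> SN n := fun w k => bar (w k).
Arguments piA : clear implicits.
Definition PiMap {R : realType} (n : nat) (z : SA n * R) : SN n * R :=
  (piA n z.1, if isLo (z.1 0) then z.2 else 1 - z.2).

Definition fiber {T R : Type} (B : set (T * R)) (xi : T) : set R :=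
  [set x | B (xi, x)].

Definition Unbhd {R : realType} (eps : R) (S : set R) : set R :=
  [set x | exists2 y, S y & `|x - y| < eps].

(* d(x,y) = 2^{-min{|k| : x_k <> y_k}}  (and 0 if x = y) *)
Definition dseq {R : realType} {K : Type} (x y : int -> K) : R :=
  sup [set r : R | exists k : int, x k <> y k /\ r = (2^-1) ^+ `|k|%N].

Definition bony {R : realType} {d} {T : semiRingOfSetsType d}
    (S : set T) (mu : set T -> \bar R) (B : set (T * R)) : Prop :=
  [/\ B `<=` [set z | S z.1 /\ 0 <= z.2 <= 1],
      almost_everywhere mu (fun xi => S xi -> exists x, fiber B xi = [set x]) &
      forall xi, S xi -> is_interval (fiber B xi)].

Definition graph_continuous {R : realType} {K : Type}
    (B : set ((int -> K) * R)) : Prop :=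
  forall xi, (fst @` B) xi -> forall eps : R, 0 < eps ->
    exists2 delta : R, 0 < delta &
      forall eta, (fst @` B) eta -> dseq eta xi < delta ->
        fiber B eta `<=` Unbhd eps (fiber B xi).

Definition bibony {R : realType} {d} {T : semiRingOfSetsType d}
    (S : set T) (mu : set T -> \bar R) (B : set (T * R)) : Prop :=
  exists B1 B2, [/\ B = B1 `|` B2, bony S mu B1 & bony S mu B2].

Definition cont_bibony {R : realType} {n : nat}
    (S : set (SN n)) (mu : set (SN n) -> \bar R) (B : set (SN n * R)) : Prop :=
  exists B1 B2, [/\ B = B1 `|` B2,
    bony S mu B1 /\ graph_continuous B1 &
    bony S mu B2 /\ graph_continuous B2].

(* Main.v *)
Require Import Defs.
From HB Require Import structures.
From mathcomp Require Import all_boot all_order all_algebra.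
From mathcomp Require Import all_classical all_reals all_analysis.
From mathcomp Require Import zify ring lra.
Import Order.TTheory GRing.Theory Num.Theory.
Local Open Scope classical_set_scope.
Local Open Scope ring_scope.
Set Implicit Arguments. Unset Strict Implicit. Unset Printing Implicit Defensive.

Section Comb.
Variable N : nat.
Local Notation AA := 'I_(N + N).

Definition mk (b : bool) (j : 'I_N) : AA := if b then lshift N j else rshift N j.
Definition sw (i : AA) : AA := mk (~~ isLo i) (bar i).

Lemma isLo_mk b j : isLo (mk b j) = b.
Proof. by case: b; rewrite /isLo /= ?ltn_ord // ltnNge leq_addr. Qed.

Lemma bar_mk b j : bar (mk b j) = j.
Proof.
case: b; rewrite /bar /=.
- by rewrite -[lshift N j]/(unsplit (inl j)) unsplitK.
- by rewrite -[rshift N j]/(unsplit (inr j)) unsplitK.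
Qed.

Lemma mkK i : mk (isLo i) (bar i) = i.
Proof.
rewrite /isLo /bar; case: split_ordP => j -> /=.
- by [].
- by [].
Qed.

Lemma mkP (i : AA) : exists b j, i = mk b j.
Proof. by exists (isLo i), (bar i); rewrite mkK. Qed.

Lemma sw_mk b j : sw (mk b j) = mk (~~ b) j.
Proof. by rewrite /sw isLo_mk bar_mk. Qed.

Lemma swK : involutive sw.
Proof. by move=> i; have [b [j ->]] := mkP i; rewrite !sw_mk negbK. Qed.

Lemma mk_inj b b' j j' : mk b j = mk b' j' -> b = b' /\ j = j'.
Proof. by move=> h; split; [rewrite -(isLo_mk b j) h isLo_mk | rewrite -(bar_mk b j) h bar_mk]. Qed.
End Comb.

Section Par.
Variable R : realType.
Variable n : nat.
Variable f : 'I_n.+1 -> R -> R.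
Hypothesis hf : forall i, orient_pres (f i) \/ orient_rev (f i).

Definition pb (i : 'I_n.+1) : bool := `[< orient_pres (f i) >].

Lemma pres_rev_excl (g : R -> R) : orient_pres g -> orient_rev g -> False.
Proof.
move=> hp hr; have := hp 0 1 (lexx _) ltr01 (lexx _).
have := hr 0 1 (lexx _) ltr01 (lexx _).
by move=> h1 h2; move: (lt_trans h1 h2); rewrite ltxx.
Qed.

Lemma adm_iff i j : adm f i j <-> isLo j = (isLo i == pb (bar i)).
Proof.
rewrite /pb; split.
- case=> -[hi hp hj].
  + by rewrite hi hj; move/asboolP: hp => ->.
  + rewrite hi (negbTE hj); case: asboolP => // hp'; exfalso; exact: pres_rev_excl hp' hp.
  + rewrite (negbTE hi) (negbTE hj); move/asboolP: hp => -> //.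
  + rewrite (negbTE hi) hj; case: asboolP => // hp'; exfalso; exact: pres_rev_excl hp' hp.
- move=> h; case: (hf (bar i)) => hp.
  + have hb : `[< orient_pres (f (bar i)) >] = true by apply/asboolP.
    rewrite hb eqb_id in h.
    case hi : (isLo i) h => h.
    * by apply: Or41; split.
    * by apply: Or43; split => //; rewrite ?hi ?h.
  + have hb : `[< orient_pres (f (bar i)) >] = false.
      by apply/asboolP => hp'; exact: pres_rev_excl hp' hp.
    rewrite hb eqbF_neg in h.
    case hi : (isLo i) h => h.
    * by apply: Or42; split => //; rewrite h.
    * by apply: Or44; split => //; rewrite ?hi ?h.
Qed.

Fixpoint parP (b : bool) (eta : seqN n) (m : nat) : bool :=
  match m with 0 => b | m'.+1 => parP b eta m' == pb (eta (Posz m')) end.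
Fixpoint parN (b : bool) (eta : seqN n) (m : nat) : bool :=
  match m with 0 => b == pb (eta (Negz 0)) | m'.+1 => parN b eta m' == pb (eta (Negz m)) end.
Definition par b eta (k : int) : bool :=
  match k with Posz m => parP b eta m | Negz m => parN b eta m end.

Lemma eqbK (x p : bool) : ((x == p) == p) = x.
Proof. by case: x; case: p. Qed.

Lemma par_rec b eta k : par b eta (k + 1) = (par b eta k == pb (eta k)).
Proof.
case: k => [m|[|m]] //=.
- by rewrite addn1.
- by rewrite eqbK.
- by rewrite subn1 /= eqbK.

Qed.

Lemma PoszS (m : nat) : (Posz m + 1 = Posz m.+1)%R.
Proof. by rewrite -addn1. Qed.
Lemma NegzS (m : nat) : (Negz m.+1 + 1 = Negz m)%R.
Proof. by rewrite !NegzE; lia. Qed.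
Lemma Negz0 : (Negz 0 + 1 = 0)%R.
Proof. by []. Qed.

Lemma rec_uniq (q : int -> bool) (a c : int -> bool) :
  (forall k, a (k + 1) = (a k == q k)) -> (forall k, c (k + 1) = (c k == q k)) ->
  a 0 = c 0 -> forall k, a k = c k.
Proof.
move=> ha hc h0; case=> m.
- elim: m => [|m ih] //.
  by have := ha (Posz m); have := hc (Posz m); rewrite PoszS => -> ->; rewrite ih.
- elim: m => [|m ih].
  + have := ha (Negz 0); have := hc (Negz 0); rewrite Negz0 -h0 => e1 e2.
    by rewrite -(eqbK (a _) (q (Negz 0))) -e2 e1 eqbK.
  + have := ha (Negz m.+1); have := hc (Negz m.+1); rewrite NegzS ih => e1 e2.
    by rewrite -(eqbK (a _) (q (Negz m.+1))) -e2 e1 eqbK.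
Qed.

Definition liftS b (eta : seqN n) : seqA n := fun k => mk (par b eta k) (eta k).
Definition flipS (w : seqA n) : seqA n := fun k => sw (w k).

Lemma liftS_SigmaA b eta : SigmaA f (liftS b eta).
Proof.
by move=> k; apply/adm_iff; rewrite /liftS !isLo_mk bar_mk par_rec.
Qed.

Lemma pi_liftS b eta : piA n (liftS b eta) = eta.
Proof. by apply: funext => k; rewrite /piA /liftS bar_mk. Qed.

Lemma liftS0 b eta : isLo (liftS b eta 0) = b.
Proof. by rewrite /liftS isLo_mk. Qed.

Lemma liftS_uniq w : SigmaA f w -> w = liftS (isLo (w 0)) (piA n w).
Proof.
move=> hw; apply: funext => k; rewrite /liftS.
have -> : par (isLo (w 0)) (piA n w) k = isLo (w k).
  apply: (@rec_uniq (fun k => pb (piA n w k)) (par (isLo (w 0)) (piA n w)) (fun k => isLo (w k))) => //.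
  - by move=> k'; rewrite par_rec.
  - by move=> k'; apply/adm_iff/hw.
by rewrite /piA mkK.
Qed.

Lemma liftS_neg b eta : liftS (~~ b) eta = flipS (liftS b eta).
Proof.
apply: funext => k; rewrite /flipS /liftS sw_mk; congr mk.
apply: (@rec_uniq (fun k => pb (eta k)) (par (~~ b) eta) (fun k => ~~ par b eta k)) => // k'.
- by rewrite par_rec.
- by rewrite par_rec; case: (par b eta k'); case: (pb _).
Qed.

Lemma flipSK : involutive flipS.
Proof. by move=> w; apply: funext => k; rewrite /flipS swK. Qed.

Lemma par_local b eta eta' k :
  (forall j, (`|j| <= `|k|)%N -> eta j = eta' j) -> par b eta k = par b eta' k.
Proof.
case: k => m /= h.
- elim: m h => [|m ih] h //=.
  rewrite ih ?h //= => j hj; apply: h; lia.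
- elim: m h => [|m ih] h /=.
  + by rewrite h.
  + rewrite ih ?h // => j hj; apply: h; lia.
Qed.

Lemma liftS_local b eta eta' k :
  (forall j, (`|j| <= `|k|)%N -> eta j = eta' j) -> liftS b eta k = liftS b eta' k.
Proof. by move=> h; rewrite /liftS (par_local b h) h. Qed.

End Par.

Section Window.
Context d (T : measurableType d) (A : finType) (ev : int -> T -> A).
Hypothesis hev : forall k i, measurable [set w : T | ev k w = i].

Definition dep (K : nat) (E : set T) :=
  forall w w', (forall k, (`|k| <= K)%N -> ev k w = ev k w') -> E w -> E w'.
Definition win K (w : T) : {ffun 'I_(K.*2).+1 -> A} :=
  [ffun j : 'I_(K.*2).+1 => ev (- (K%:Z) + (nat_of_ord j)%:Z) w].
Definition wcyl (K : nat) (s : {ffun 'I_(K.*2).+1 -> A}) : set T := [set w | win K w = s].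

Lemma wcyl_meas K s : measurable (@wcyl K s).
Proof.
have -> : @wcyl K s = \bigcap_(j in @setT 'I_(K.*2).+1) [set w | ev (- (K%:Z) + (nat_of_ord j)%:Z) w = s j].
  apply/seteqP; split => w /=.
  - by move=> <- j _; rewrite ffunE.
  - by move=> h; apply/ffunP => j; rewrite ffunE; exact: h.
by apply: fin_bigcap_measurable; [exact: finite_finset | move=> j _; exact: hev].
Qed.

Lemma win_agree K w w' : win K w = win K w' -> forall k, (`|k| <= K)%N -> ev k w = ev k w'.
Proof.
move=> h k hk.
have hj : (absz (k + K%:Z)%R < (K.*2).+1)%N by rewrite -muln2; lia.
have := congr1 (fun g : {ffun 'I_(K.*2).+1 -> A} => g (Ordinal hj)) h; rewrite !ffunE /=.
by have -> : - K%:Z + (absz (k + K%:Z)%R)%:Z = k by lia.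
Qed.

Lemma dep_meas K E : dep K E -> measurable E.
Proof.
move=> hE.
have -> : E = \bigcup_(s in [set s | exists w, E w /\ win K w = s]) @wcyl K s.
  apply/seteqP; split => w.
  - by move=> Ew; exists (win K w) => //; exists w.
  - move=> [s [w' [Ew' hw']] /= hw]; apply: (hE w') => //.
    by apply: win_agree; rewrite hw hw'.
by apply: fin_bigcup_measurable; [exact: finite_finset | move=> s _; exact: wcyl_meas].
Qed.

Lemma dep_setI K K' E E' : dep K E -> dep K' E' -> dep (maxn K K') (E `&` E').
Proof.
move=> h h' w w' hw [Ew Ew']; split.
- by apply: (h w) => // k hk; apply: hw; rewrite leq_max hk.
- by apply: (h' w) => // k hk; apply: hw; rewrite leq_max hk orbT.
Qed.

End Window.

Section Meas.
Variable n : nat.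

Definition evA (k : int) (w : SA n) := w k.
Definition evN (k : int) (w : SN n) := w k.

Lemma evA_meas k i : measurable [set w : SA n | evA k w = i].
Proof. by apply: sub_sigma_algebra; exists k, i. Qed.
Lemma evN_meas k i : measurable [set w : SN n | evN k w = i].
Proof. by apply: sub_sigma_algebra; exists k, i. Qed.

Lemma meas_toA d (T : measurableType d) (g : T -> SA n) :
  (forall k i, measurable [set x | g x k = i]) -> measurable_fun setT g.
Proof.
move=> h; apply: (@measurability _ _ _ _ setT g (cylA n)) => //.
by move=> _ [C [k [i ->]] <-]; rewrite setTI; exact: h.
Qed.

Lemma meas_toN d (T : measurableType d) (g : T -> SN n) :
  (forall k i, measurable [set x | g x k = i]) -> measurable_fun setT g.
Proof.
move=> h; apply: (@measurability _ _ _ _ setT g (cylN n)) => //.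
by move=> _ [C [k [i ->]] <-]; rewrite setTI; exact: h.
Qed.

Lemma piA_meas : measurable_fun setT (piA n : SA n -> SN n).
Proof.
apply: meas_toN => k i; apply: (@dep_meas _ _ _ evA (@evA_meas) `|k|%N).
by move=> w w' h; rewrite /= /piA => <-; have := h k (leqnn _); rewrite /evA => ->.
Qed.

Lemma flipS_meas : measurable_fun setT (flipS (n:=n) : SA n -> SA n).
Proof.
apply: meas_toA => k i; apply: (@dep_meas _ _ _ evA (@evA_meas) `|k|%N).
by move=> w w' h; rewrite /= /flipS => <-; have := h k (leqnn _); rewrite /evA => ->.
Qed.

Variable R : realType.
Variable f : 'I_n.+1 -> R -> R.

Lemma liftS_meas b : measurable_fun setT (liftS f b : SN n -> SA n).
Proof.
apply: meas_toA => k i; apply: (@dep_meas _ _ _ evN (@evN_meas) `|k|%N).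
move=> w w' h; rewrite /= => <-; apply: liftS_local => j hj.
by have := h j hj; rewrite /evN => ->.
Qed.

End Meas.

Section FlipMeasure.
Local Open Scope ereal_scope.
Variables (R : realType) (n : nat) (lam : {measure set (SA n) -> \bar R}).
Definition lamF : set (SA n) -> \bar R := fun A => lam (@flipS n @^-1` A).
Let mf := @flipS_meas n.
Let lamF0 : lamF set0 = 0.
Proof. by rewrite /lamF preimage_set0 measure0. Qed.
Let lamF_ge0 A : 0 <= lamF A.
Proof. exact: measure_ge0. Qed.
Let lamF_sa : semi_sigma_additive lamF.
Proof.
move=> F mF tF mUF; rewrite /lamF preimage_bigcup.
apply: measure_semi_sigma_additive.
- by move=> k; rewrite -[X in measurable X]setTI; exact: mf.
- apply/trivIsetP => /= i j _ _ ij; rewrite -preimage_setI.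
  by move/trivIsetP : tF => /(_ _ _ _ _ ij) ->//; rewrite preimage_set0.
- by rewrite -preimage_bigcup -[X in measurable X]setTI; exact: mf.
Qed.
HB.instance Definition _ := isMeasure.Build _ _ _ lamF lamF0 lamF_ge0 lamF_sa.
End FlipMeasure.

Section Inv.
Variables (R : realType) (n : nat) (f : 'I_n.+1 -> R -> R).
Variables (p : 'I_(n.+1 + n.+1) -> R) (P : 'I_(n.+1 + n.+1) -> 'I_(n.+1 + n.+1) -> R).
Variable lam : probability (SA n) R.
Hypothesis hlam : symmetric_markov f p P lam.
Local Notation AA := 'I_(n.+1 + n.+1).

Lemma p_sw i : p (sw i) = p i.
Proof.
have [b [j ->]] := mkP i; rewrite sw_mk; have [h1 _ _] := hlam.2 j j.
by case: b; rewrite /mk /= h1.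
Qed.

Lemma P_sw i j : P (sw i) (sw j) = P i j.
Proof.
have [b [i' ->]] := mkP i; have [b' [j' ->]] := mkP j; rewrite !sw_mk.
have [_ h2 h3] := hlam.2 i' j'.
by case: b; case: b'; rewrite /mk /= ?h2 ?h3.
Qed.

Definition swf K (s : {ffun 'I_(K.*2).+1 -> AA}) : {ffun 'I_(K.*2).+1 -> AA} :=
  [ffun j => sw (s j)].

Lemma swfK K : involutive (@swf K).
Proof. by move=> s; apply/ffunP => j; rewrite !ffunE swK. Qed.

Lemma mweight_sw K s : mweight p P (@swf K s) = mweight p P s.
Proof.
rewrite /mweight ffunE p_sw; congr (_ * _); apply: eq_bigr => j _.
by rewrite !ffunE P_sw.
Qed.

Lemma win_flip K (w : SA n) : win (@evA n) K (flipS w) = swf (win (@evA n) K w).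
Proof. by apply/ffunP => j; rewrite !ffunE. Qed.

Lemma lam_wcyl K s : lam (@wcyl _ _ _ (@evA n) K s) = (mweight p P s)%:E.
Proof.
have -> : @wcyl _ _ _ (@evA n) K s = @cylinder _ (- K%:Z) (K.*2) s.
  apply/seteqP; split => w /=.
  - by move=> <- j; rewrite ffunE.
  - by move=> h; apply/ffunP => j; rewrite ffunE /evA h.
by have [_ _ _ _ hc] := hlam.1; rewrite hc.
Qed.

Lemma flip_pre_meas (E : set (SA n)) : measurable E -> measurable ((@flipS n @^-1` E) : set (SA n)).
Proof. by move=> mE; have := @flipS_meas n measurableT E mE; rewrite setTI. Qed.

Lemma lamF_dep K E : dep (@evA n) K E -> lam E = lamF lam E.
Proof.
move=> hE.
have mE : measurable E := dep_meas (@evA_meas n) hE.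
have cover1 : E = \bigcup_(s in setT) (E `&` @wcyl _ _ _ (@evA n) K (swf s)).
  apply/seteqP; split => w.
  - move=> Ew; exists (swf (win (@evA n) K w)) => //; split => //.
    by rewrite /wcyl /= swfK.
  - by move=> [s _ []].
have cover2 : @flipS n @^-1` E = \bigcup_(s in setT) (@flipS n @^-1` E `&` @wcyl _ _ _ (@evA n) K s).
  apply/seteqP; split => w.
  - by move=> Ew; exists (win (@evA n) K w).
  - by move=> [s _ []].
have e1 : lam E = (\sum_(s \in setT) lam (E `&` @wcyl _ _ _ (@evA n) K (swf s)))%E.
  rewrite {1}cover1; apply: measure_fin_bigcup.
  - exact: finite_finset.
  - move=> s s' _ _ [w [[_ h1] [_ h2]]].
    by rewrite -[s]swfK -[s']swfK; congr swf; rewrite -h1 -h2.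
  - by move=> s _; apply: measurableI => //; exact: wcyl_meas (@evA_meas n) _ _.
have e2 : lamF lam E = (\sum_(s \in setT) lam (@flipS n @^-1` E `&` @wcyl _ _ _ (@evA n) K s))%E.
  rewrite /lamF {1}cover2; apply: measure_fin_bigcup.
  - exact: finite_finset.
  - move=> s s' _ _ [w [[_ h1] [_ h2]]].
    by rewrite -h1 -h2.
  - by move=> s _; apply: measurableI; [exact: flip_pre_meas | exact: wcyl_meas (@evA_meas n) _ _].
rewrite e1 e2; apply: eq_fsbigr => s _.
have [[w0 [Ew0 hw0]] | hno] := pselect (exists w, E w /\ win (@evA n) K w = swf s).
- have -> : E `&` @wcyl _ _ _ (@evA n) K (swf s) = @wcyl _ _ _ (@evA n) K (swf s).
    apply/seteqP; split; first by move=> w [].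
    move=> w hw; split => //; apply: (hE w0) => //.
    by apply: win_agree; rewrite hw0 hw.
  have -> : @flipS n @^-1` E `&` @wcyl _ _ _ (@evA n) K s = @wcyl _ _ _ (@evA n) K s.
    apply/seteqP; split; first by move=> w [].
    move=> w hw; split => //; apply: (hE w0) => //.
    by apply: win_agree; rewrite hw0 win_flip hw.
  by rewrite !lam_wcyl mweight_sw.
- have -> : E `&` @wcyl _ _ _ (@evA n) K (swf s) = set0.
    by apply/seteqP; split => // w [Ew hw]; apply: hno; exists w.
  have -> : @flipS n @^-1` E `&` @wcyl _ _ _ (@evA n) K s = set0.
    apply/seteqP; split => // w [Ew hw]; apply: hno; exists (flipS w); split => //.
    by rewrite win_flip hw.
  by rewrite measure0.
Qed.

Lemma lam_flip (E : set (SA n)) : measurable E -> lam (@flipS n @^-1` E) = lam E.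
Proof.
move=> mE; symmetry.
pose G := [set E : set (SA n) | exists K, dep (@evA n) K E].
have := @measure_unique _ R (SA n) G (fun _ => setT) _ _ _ _ lam (lamF lam) _ _ E mE.
apply.
- apply/seteqP; split.
  + apply: smallest_sub; first exact: smallest_sigma_algebra.
    move=> C [k [i ->]]; apply: sub_sigma_algebra; exists `|k|%N.
    by move=> w w' h; rewrite /= => <-; have := h k (leqnn _); rewrite /evA => ->.
  + apply: smallest_sub; first exact: (@sigma_algebra_measurable _ (SA n)).
    by move=> C [K hC]; have := dep_meas (@evA_meas n) hC.
- by move=> A B [K hA] [K' hB]; exists (maxn K K'); exact: dep_setI.
- by move=> _; exists 0%N.
- by apply/seteqP; split => // w _; exists 0%N.
- by move=> A [K hA]; exact: lamF_dep hA.
- by move=> _ /=; rewrite probability_setT ltry.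
Qed.

End Inv.

Section Null.
Variables (R : realType) (n : nat) (f : 'I_n.+1 -> R -> R).
Hypothesis hf : forall i, orient_pres (f i) \/ orient_rev (f i).
Variables (p : 'I_(n.+1 + n.+1) -> R) (P : 'I_(n.+1 + n.+1) -> 'I_(n.+1 + n.+1) -> R).
Variable lam : probability (SA n) R.
Hypothesis hlam : symmetric_markov f p P lam.
Local Notation AA := 'I_(n.+1 + n.+1).

Definition pr2 (a b : AA) : 'I_2 -> AA := fun j => if j == ord0 then a else b.

Lemma Zk_null (k : int) : lam.-negligible [set w : SA n | ~ adm f (w k) (w (k + 1))].
Proof.
pose C (ab : AA * AA) : set (SA n) := @cylinder _ k 1 (pr2 ab.1 ab.2).
pose D := [set ab : AA * AA | ~ adm f ab.1 ab.2].
have e : [set w : SA n | ~ adm f (w k) (w (k + 1))] = \bigcup_(ab in D) C ab.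
  apply/seteqP; split => w.
  - move=> hw; exists (w k, w (k + 1)) => //.
    by case=> -[|[|m]] hm //=; rewrite ?addr0.
  - move=> [[a b] /= hab hC]; rewrite /=.
    have h0 := hC ord0; have h1 := hC (lift ord0 ord0).
    by rewrite /= addr0 in h0; rewrite /= in h1; rewrite h0 h1.
have mC ab : measurable (C ab).
  apply: (@dep_meas _ _ _ (@evA n) (@evA_meas n) (`|k|%N.+1)).
  move=> w w' h hw j; rewrite -hw /evA.
  by symmetry; apply: h; case: j => -[|[|m]] hm //=; lia.
have hC ab : D ab -> lam (C ab) = 0%E.
  move=> hab; have [_ _ hna _ hc] := hlam.1.
  by rewrite /C hc /mweight big_ord1 /= hna // mulr0.
exists [set w : SA n | ~ adm f (w k) (w (k + 1))]; split => //.
- by rewrite e; apply: fin_bigcup_measurable => //; exact: finite_finset.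
- rewrite e measure_fin_bigcup.
  + by apply: fsbig1 => ab hab; exact: hC.
  + exact: finite_finset.
  + move=> [a b] [a' b'] _ _ [w [h1 h2]].
    have e0 := h1 ord0; have e1 := h1 (lift ord0 ord0).
    have e0' := h2 ord0; have e1' := h2 (lift ord0 ord0).
    rewrite /pr2 /= in e0 e1 e0' e1'.
    by rewrite -e0 -e0' -e1 -e1'.
  + by move=> ab _; exact: mC.
Qed.

Lemma SigmaA_null : lam.-negligible (~` SigmaA f).
Proof.
apply: (negligibleS _ (negligible_bigcup (fun m => negligibleU (Zk_null (Posz m)) (Zk_null (Negz m))))).
move=> w /= hw; have /existsNP [k hk] := hw.
case: k hk => m hm; exists m => //; [left | right]; exact: hm.
Qed.

Lemma neq_negb (c b : bool) : c != b -> b = ~~ c.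
Proof. by case: c; case: b. Qed.

Lemma null_pull (Nn : set (SA n)) b : measurable Nn -> lam Nn = 0%E ->
  lam ((fun w : SA n => (liftS f b (piA n w) : SA n)) @^-1` Nn) = 0%E.
Proof.
move=> mN N0.
have [Z [mZ Z0 hZ]] := SigmaA_null.
have mX : measurable ((fun w : SA n => (liftS f b (piA n w) : SA n)) @^-1` Nn).
  have := @measurableT_comp _ _ _ (SA n) (SN n) (SA n) (liftS f b) setT (piA n)
     (@liftS_meas n R f b) (@piA_meas n) measurableT Nn mN.
  by rewrite setTI.
have sub : (fun w : SA n => (liftS f b (piA n w) : SA n)) @^-1` Nn `<=`
    Nn `|` ((@flipS n @^-1` Nn : set (SA n)) `|` Z).
  move=> w Xw; have [hw|hw] := pselect (SigmaA f w); last by right; right; apply: hZ.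
  have e := liftS_uniq hf hw.
  have [hb|hb] := boolP (isLo (w 0) == b).
  - by left; move: Xw; rewrite /= -(eqP hb) -e.
  - right; left; move: Xw; rewrite /= (neq_negb hb).
    by rewrite liftS_neg -e.
have mF : measurable ((@flipS n @^-1` Nn) : set (SA n)) by exact: flip_pre_meas.
have mU : measurable (Nn `|` ((@flipS n @^-1` Nn : set (SA n)) `|` Z)).
  by apply: measurableU => //; apply: measurableU.
have h1 := @le_measure _ _ _ lam _ _ (mem_set mX) (mem_set mU) sub.
have a1 : (lam Nn <= 0)%E by rewrite N0.
have a3 : (lam ((@flipS n @^-1` Nn) : set (SA n)) <= 0)%E by rewrite (lam_flip hlam mN) N0.
have a4 : (lam Z <= 0)%E by rewrite Z0.
apply/eqP; rewrite -measure_le0; apply: (le_trans h1).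
apply: (le_trans (measureU2 _ _ _)) => //; first exact: measurableU.
rewrite -[leRHS](adde0 0%E); apply: leeD; first exact: a1.
apply: (le_trans (measureU2 _ _ _)) => //.
by rewrite -[leRHS](adde0 0%E); exact: leeD.
Qed.

End Null.

Section Dseq.
Variables (R : realType) (n : nat) (f : 'I_n.+1 -> R -> R).

Lemma dseq_liftS b (eta eta' : SN n) :
  (dseq (liftS f b eta') (liftS f b eta) <= dseq eta' eta :> R).
Proof.
rewrite /dseq.
set S1 := [set r : R | _]; set S2 := [set r : R | _].
have h20 : (0 : R) <= 2^-1 by rewrite invr_ge0.
have h21 : (2^-1 : R) <= 1 by rewrite invf_le1 //; lra.
have ub2 : has_ubound S2.
  by exists 1 => r [k [_ ->]]; exact: exprn_ile1.
have sup2_ge0 : 0 <= sup S2.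
  have [[r hr]|hS2] := pselect (S2 !=set0).
  - apply: le_trans (ub_le_sup ub2 hr); case: hr => k [_ ->]; exact: exprn_ge0.
  - have -> : S2 = set0 by apply/seteqP; split => // r hr; apply: hS2; exists r.
    by rewrite sup0.
have [hS1|hS1] := pselect (S1 !=set0); last first.
  have -> : S1 = set0 by apply/seteqP; split => // r hr; apply: hS1; exists r.
  by rewrite sup0.
apply: ge_sup => // r [k [hne ->]].
have [j [hj hne']] : exists j, (`|j| <= `|k|)%N /\ eta' j <> eta j.
  apply: contrapT => hno; apply: hne; apply: liftS_local => j hj.
  apply: contrapT => hne'; apply: hno; exists j; split => //.
apply: le_trans (ub_le_sup ub2 _); last by exists j; split.
exact: ler_wiXn2l.
Qed.
End Dseq.

Section Main.
Variables (R : realType) (n : nat) (f : 'I_n.+1 -> R -> R).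
Hypothesis hf : forall i, orient_pres (f i) \/ orient_rev (f i).
Variables (p : 'I_(n.+1 + n.+1) -> R) (P : 'I_(n.+1 + n.+1) -> 'I_(n.+1 + n.+1) -> R).
Variable lam : probability (SA n) R.
Hypothesis hlam : symmetric_markov f p P lam.
Variable B : set (SA n * R).
Hypothesis hB : bony (T := SA n) (SigmaA f) lam B.

Definition B1 : set (SN n * R) := PiMap (R:=R) (n:=n) @` [set z | B z /\ isLo (z.1 0)].
Definition B2 : set (SN n * R) := PiMap (R:=R) (n:=n) @` [set z | B z /\ ~~ isLo (z.1 0)].

Lemma hBsub : B `<=` [set z | SigmaA f z.1 /\ 0 <= z.2 <= 1].
Proof. by case: hB. Qed.

Lemma PiB_eq : PiMap (R:=R) (n:=n) @` B = B1 `|` B2.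
Proof.
apply/seteqP; split => z.
- move=> [w Bw <-]; have [h|h] := boolP (isLo (w.1 0)); [left|right]; by exists w.
- by move=> [[w [Bw _] <-]|[w [Bw _] <-]]; exists w.
Qed.

Lemma fiber_B1 eta : fiber B1 eta = fiber B (liftS f true eta).
Proof.
apply/seteqP; split => x.
- move=> [[w y] [Bw hlo] e]; rewrite /fiber /=.
  have hw := (hBsub Bw).1; rewrite /= in hw hlo.
  move: e; rewrite /PiMap /= hlo => -[e1 e2].
  by rewrite -e1 -e2 -hlo -(liftS_uniq hf hw).
- move=> hx; exists (liftS f true eta, x); first by split => //=; rewrite liftS0.
  by rewrite /PiMap /= liftS0 pi_liftS.
Qed.

Lemma fiber_B2 eta : fiber B2 eta = [set x | fiber B (liftS f false eta) (1 - x)].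
Proof.
apply/seteqP; split => x.
- move=> [[w y] [Bw hlo] e]; rewrite /fiber /=.
  have hw := (hBsub Bw).1; rewrite /= in hw hlo.
  move: e; rewrite /PiMap /= (negbTE hlo) => -[e1 e2].
  rewrite -e1 -e2 opprB addrC subrK.
  by rewrite -(negbTE hlo) -(liftS_uniq hf hw).
- move=> hx; exists (liftS f false eta, 1 - x); first by split => //=; rewrite liftS0.
  by rewrite /PiMap /= liftS0 pi_liftS opprB addrC subrK.
Qed.

Lemma bony_B1 : bony [set: SN n] (pushforward lam (piA n)) B1.
Proof.
have [hsub hae hint] := hB.
split.
- move=> z [[w y] [Bw hlo] <-]; have [_ hy] := hBsub Bw.
  by rewrite /PiMap /= hlo.
- have [Nn [mN N0 hN]] := hae.
  exists (liftS f true @^-1` Nn); split.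
  + by have := @liftS_meas n R f true measurableT Nn mN; rewrite setTI.
  + exact: (null_pull hf hlam true mN N0).
  + move=> eta /= hbad; apply: hN => /= himp; apply: hbad => _.
    by rewrite fiber_B1; apply: himp; exact: liftS_SigmaA.
- by move=> eta _; rewrite fiber_B1; apply: hint; exact: liftS_SigmaA.
Qed.

Lemma bony_B2 : bony [set: SN n] (pushforward lam (piA n)) B2.
Proof.
have [hsub hae hint] := hB.
split.
- move=> z [[w y] [Bw hlo] <-]; have [_ hy] := hBsub Bw.
  rewrite /PiMap /= (negbTE hlo); split => //; move: hy => /= /andP[h0 h1].
  by apply/andP; split; lra.
- have [Nn [mN N0 hN]] := hae.
  exists (liftS f false @^-1` Nn); split.
  + by have := @liftS_meas n R f false measurableT Nn mN; rewrite setTI.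
  + exact: (null_pull hf hlam false mN N0).
  + move=> eta /= hbad; apply: hN => /= himp; apply: hbad => _.
    have [y hy] := himp (liftS_SigmaA hf _ _); exists (1 - y).
    rewrite fiber_B2; apply/seteqP; split => x /=; rewrite hy /=.
    * by move=> <-; rewrite opprB addrC subrK.
    * by move=> ->; rewrite opprB addrC subrK.
- move=> eta _; rewrite fiber_B2 => x y hx hy z /andP[hxz hzy] /=.
  apply: (hint _ (liftS_SigmaA hf _ _) (1 - y) (1 - x)) => //.
  by apply/andP; split; lra.
Qed.

Hypothesis hcont : graph_continuous B.

Lemma cont_B1 : graph_continuous B1.
Proof.
move=> eta [[e x] hB1 /= <-] eps heps.
have hx : fiber B1 e x by [].
rewrite fiber_B1 in hx.
have [delta hd hc] := hcont (ex_intro2 _ _ (liftS f true e, x) hx erefl) heps.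
exists delta => // eta' [[e' x'] hB1' <-] hd' /=.
have hx' : fiber B1 e' x' by [].
rewrite fiber_B1 in hx'.
rewrite !fiber_B1; apply: hc.
- by exists (liftS f true e', x').
- exact: le_lt_trans (dseq_liftS f true e e') hd'.
Qed.

Lemma cont_B2 : graph_continuous B2.
Proof.
move=> eta [[e x] hB2 /= <-] eps heps.
have hx : fiber B2 e x by [].
rewrite fiber_B2 in hx.
have [delta hd hc] := hcont (ex_intro2 _ _ (liftS f false e, 1 - x) hx erefl) heps.
exists delta => // eta' [[e' x'] hB2' <-] hd' /=.
have hx' : fiber B2 e' x' by [].
rewrite fiber_B2 in hx'.
rewrite !fiber_B2 => u hu.
have [v hv huv] := hc (liftS f false e') (ex_intro2 _ _ (liftS f false e', 1 - x') hx' erefl)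
   (le_lt_trans (dseq_liftS f false e e') hd') (1 - u) hu.
exists (1 - v); first by rewrite /= opprB addrC subrK.
by rewrite (_ : u - (1 - v) = - (1 - u - v)) ?normrN //; ring.
Qed.

End Main.

Theorem lemma3p15 (R : realType) (n : nat) (f : 'I_n.+1 -> R -> R)
  (hf : forall i, orient_pres (f i) \/ orient_rev (f i))
  (p : 'I_(n.+1 + n.+1) -> R)
  (P : 'I_(n.+1 + n.+1) -> 'I_(n.+1 + n.+1) -> R)
  (lam : probability (SA n) R)
  (hlam : symmetric_markov f p P lam)
  (B : set (SA n * R))
  (hB : bony (T := SA n) (SigmaA f) lam B) :
  bibony [set: SN n] (pushforward lam (piA n)) (PiMap (R:=R) (n:=n) @` B) /\
  (graph_continuous B ->
   cont_bibony [set: SN n] (pushforward lam (piA n)) (PiMap (R:=R) (n:=n) @` B)).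
Proof.
split.
- exists (B1 B), (B2 B); split.
  + exact (PiB_eq B).
  + exact (bony_B1 hf hlam hB).
  + exact (bony_B2 hf hlam hB).
- move=> hc; exists (B1 B), (B2 B); split.
  + exact (PiB_eq B).
  + split; [exact (bony_B1 hf hlam hB) | exact (cont_B1 hf hB hc)].
  + split; [exact (bony_B2 hf hlam hB) | exact (cont_B2 hf hB hc)].
Qed.
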